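(* Let $\mathcal{V}$ be a quaternionic two-sided Banach algebra with unit $1\neq0$, let $a\in\mathcal{V}$ and $q\in\partial\sigma_S(a)$. Then there exists a sequence $(b_n)$ of elements of $\mathcal{V}$ with $\|b_n\|=1$ and $$\lim_{n}(a^{2}-2Re(q)a+|q|^{2}1_{\mathcal{V}})b_{n}=\lim_{n}b_{n}(a^{2}-2Re(q)a+|q|^{2}1_{\mathcal{V}})=0.$$
   Context: $\mathbb{H}$ denotes the quaternions, $Re(q)$ the real part and $|q|$ the norm of $q$. A quaternionic two-sided Banach algebra with unit is a two-sided $\mathbb{H}$-vector space $\mathcal{V}$ with an associative product satisfying $x(y+z)=xy+xz$, $(x+y)z=xz+yz$, $q(xy)=(qx)y$, $(xy)q=x(yq)$, complete for a norm with $\|qx\|=|q|\|x\|=\|xq\|$, $\|xy\|\le\|x\|\|y\|$, with unit $1_{\mathcal{V}}$, $\|1_{\mathcal{V}}\|=1$. $\mathcal{V}^{-1}$ is the set of invertible elements. The S-spectrum of $a$ is $\sigma_S(a)=\{q\in\mathbb{H}: a^2-2Re(q)a+|q|^21_{\mathcal{V}}\notin\mathcal{V}^{-1}\}$, and $\partial\sigma_S(a)$ is its boundary in $\mathbb{H}$. *)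

(* Defs.v *)
From mathcomp Require Import all_boot all_order all_algebra.
From mathcomp Require Import all_classical all_reals all_analysis.
Set Implicit Arguments. Unset Strict Implicit. Unset Printing Implicit Defensive.
Import Order.TTheory GRing.Theory Num.Theory.
Local Open Scope classical_set_scope.
Local Open Scope ring_scope.

Record quat (R : realType) := Quat { qre : R; qi : R; qj : R; qk : R }.

Section Quat.
Variable R : realType.
Definition qadd (p q : quat R) : quat R :=
  Quat (qre p + qre q) (qi p + qi q) (qj p + qj q) (qk p + qk q).
Definition qopp (p : quat R) : quat R := Quat (- qre p) (- qi p) (- qj p) (- qk p).
Definition qsub (p q : quat R) : quat R := qadd p (qopp q).
Definition qmul (p q : quat R) : quat R :=
  Quat (qre p * qre q - qi p * qi q - qj p * qj q - qk p * qk q)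
       (qre p * qi q + qi p * qre q + qj p * qk q - qk p * qj q)
       (qre p * qj q - qi p * qk q + qj p * qre q + qk p * qi q)
       (qre p * qk q + qi p * qj q - qj p * qi q + qk p * qre q).
Definition qofR (r : R) : quat R := Quat r 0 0 0.
Definition qone : quat R := qofR 1.
Definition Req (q : quat R) : R := qre q.
Definition qnorm (q : quat R) : R :=
  Num.sqrt (qre q ^+ 2 + qi q ^+ 2 + qj q ^+ 2 + qk q ^+ 2).
End Quat.

Record is_qbanach_alg (R : realType) (V : zmodType)
    (lmul : quat R -> V -> V) (rmul : V -> quat R -> V)
    (mul : V -> V -> V) (one : V) (nrm : V -> R) : Prop := {
  lmulDr : forall p x y, lmul p (x + y) = lmul p x + lmul p y;
  lmulDl : forall p q x, lmul (qadd p q) x = lmul p x + lmul q x;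
  lmulA  : forall p q x, lmul (qmul p q) x = lmul p (lmul q x);
  lmul1  : forall x, lmul (qone R) x = x;
  rmulDl : forall x y p, rmul (x + y) p = rmul x p + rmul y p;
  rmulDr : forall x p q, rmul x (qadd p q) = rmul x p + rmul x q;
  rmulA  : forall x p q, rmul x (qmul p q) = rmul (rmul x p) q;
  rmul1  : forall x, rmul x (qone R) = x;
  lrmulA : forall p x q, lmul p (rmul x q) = rmul (lmul p x) q;
  mulA   : forall x y z, mul x (mul y z) = mul (mul x y) z;
  mulDr  : forall x y z, mul x (y + z) = mul x y + mul x z;
  mulDl  : forall x y z, mul (x + y) z = mul x z + mul y z;
  lmul_mul : forall q x y, lmul q (mul x y) = mul (lmul q x) y;
  rmul_mul : forall q x y, rmul (mul x y) q = mul x (rmul y q);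
  mul1x  : forall x, mul one x = x;
  mulx1  : forall x, mul x one = x;
  nrm_eq0 : forall x, nrm x = 0 -> x = 0;
  nrm0    : nrm 0 = 0;
  nrmD    : forall x y, nrm (x + y) <= nrm x + nrm y;
  nrm_lmul : forall q x, nrm (lmul q x) = qnorm q * nrm x;
  nrm_rmul : forall q x, nrm (rmul x q) = qnorm q * nrm x;
  nrmM    : forall x y, nrm (mul x y) <= nrm x * nrm y;
  nrm1    : nrm one = 1;
  complete : forall u : nat -> V,
    (forall e : R, 0 < e -> exists N : nat, forall m n : nat,
        (N <= m)%N -> (N <= n)%N -> nrm (u m - u n) < e) ->
    exists l : V, (fun n => nrm (u n - l)) @ \oo --> 0
}.

Definition qinvertible (V : zmodType) (mul : V -> V -> V) (one : V) (x : V) :=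
  exists y : V, mul x y = one /\ mul y x = one.

Definition Qop (R : realType) (V : zmodType) (lmul : quat R -> V -> V)
    (mul : V -> V -> V) (one : V) (a : V) (q : quat R) : V :=
  mul a a - lmul (qofR (2 * Req q)) a + lmul (qofR (qnorm q ^+ 2)) one.

Definition S_spectrum (R : realType) (V : zmodType) (lmul : quat R -> V -> V)
    (mul : V -> V -> V) (one : V) (a : V) : quat R -> Prop :=
  fun q => ~ qinvertible mul one (Qop lmul mul one a q).

Definition qboundary (R : realType) (S : quat R -> Prop) (q : quat R) : Prop :=
  forall e : R, 0 < e ->
    (exists p, qnorm (qsub p q) < e /\ S p) /\
    (exists p, qnorm (qsub p q) < e /\ ~ S p).

(* Main.v *)
Require Import Defs.
From mathcomp Require Import all_boot all_order all_algebra.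
From mathcomp Require Import all_classical all_reals all_analysis.
From mathcomp Require Import ring lra.
Import Order.TTheory GRing.Theory Num.Theory.
Local Open Scope classical_set_scope.
Local Open Scope ring_scope.
Set Implicit Arguments. Unset Strict Implicit. Unset Printing Implicit Defensive.

Lemma cvg0P (R : realType) (u : nat -> R) : (forall n, 0 <= u n) ->
  (u @ \oo --> 0 <-> forall e, 0 < e -> exists N, forall n, (N <= n)%N -> u n < e).
Proof.
move=> u0; rewrite cvgrPdist_lt; split.
- move=> H e e0; have [N _ HN] := H e e0; exists N => n Nn.
  have := HN n Nn; rewrite /= sub0r normrN ger0_norm //.
- move=> H e e0; have [N HN] := H e e0; exists N => // n Nn.
  by rewrite /= sub0r normrN ger0_norm //; apply: HN.
Qed.

Lemma geomN (R : realType) (e : R) : 0 < e -> exists N, forall n, (N <= n)%N -> (2^-1) ^+ n < e.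
Proof.
move=> e0.
have H : (fun n => (2^-1 : R) ^+ n) @ \oo --> 0.
  have := @cvg_geometric R 1 (2^-1).
  rewrite gtr0_norm ?invr_gt0 // invf_lt1 ?ltr1n // => /(_ isT).
  by apply: cvg_trans; apply: near_eq_cvg; near=> n; rewrite /geometric /= mul1r.
move: H; rewrite cvg0P; first by apply. by move=> n; apply: exprn_ge0; rewrite invr_ge0.
Unshelve. all: by end_near.
Qed.

Lemma mulx0 R V lmul rmul mul one nrm (HV : @is_qbanach_alg R V lmul rmul mul one nrm) x :
  mul x 0 = 0.
Proof. by have := mulDr HV x 0 0; rewrite addr0 => /(congr1 (fun t => t - mul x 0)); rewrite subrr addrK. Qed.
Lemma mul0x R V lmul rmul mul one nrm (HV : @is_qbanach_alg R V lmul rmul mul one nrm) x :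
  mul 0 x = 0.
Proof. by have := mulDl HV 0 0 x; rewrite addr0 => /(congr1 (fun t => t - mul 0 x)); rewrite subrr addrK. Qed.
Lemma mulxN R V lmul rmul mul one nrm (HV : @is_qbanach_alg R V lmul rmul mul one nrm) x y :
  mul x (- y) = - mul x y.
Proof. by apply/eqP; rewrite -addr_eq0 -(mulDr HV) addNr (mulx0 HV). Qed.
Lemma mulNx R V lmul rmul mul one nrm (HV : @is_qbanach_alg R V lmul rmul mul one nrm) x y :
  mul (- x) y = - mul x y.
Proof. by apply/eqP; rewrite -addr_eq0 -(mulDl HV) addNr (mul0x HV). Qed.
Lemma mulxB R V lmul rmul mul one nrm (HV : @is_qbanach_alg R V lmul rmul mul one nrm) x y z :
  mul x (y - z) = mul x y - mul x z.
Proof. by rewrite (mulDr HV) (mulxN HV). Qed.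
Lemma mulBx R V lmul rmul mul one nrm (HV : @is_qbanach_alg R V lmul rmul mul one nrm) x y z :
  mul (x - y) z = mul x z - mul y z.
Proof. by rewrite (mulDl HV) (mulNx HV). Qed.

Lemma qofRD (R : realType) (r s : R) : qofR (r + s) = qadd (qofR r) (qofR s).
Proof. by rewrite /qadd /qofR /= addr0. Qed.
Lemma qnormR (R : realType) (r : R) : qnorm (qofR r) = `|r|.
Proof. by rewrite /qnorm /qofR /= !expr2 !mulr0 !addr0 -expr2 sqrtr_sqr. Qed.

Lemma lmulRD R V lmul rmul mul one nrm (HV : @is_qbanach_alg R V lmul rmul mul one nrm) r s v :
  lmul (qofR (r + s)) v = lmul (qofR r) v + lmul (qofR s) v.
Proof. by rewrite qofRD (lmulDl HV). Qed.
Lemma rmulRD R V lmul rmul mul one nrm (HV : @is_qbanach_alg R V lmul rmul mul one nrm) r s v :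
  rmul v (qofR (r + s)) = rmul v (qofR r) + rmul v (qofR s).
Proof. by rewrite qofRD (rmulDr HV). Qed.
Lemma lmulR0 R V lmul rmul mul one nrm (HV : @is_qbanach_alg R V lmul rmul mul one nrm) v :
  lmul (qofR 0) v = 0.
Proof. by have := lmulRD HV 0 0 v; rewrite addr0 => /(congr1 (fun t => t - lmul (qofR 0) v)); rewrite subrr addrK. Qed.
Lemma rmulR0 R V lmul rmul mul one nrm (HV : @is_qbanach_alg R V lmul rmul mul one nrm) v :
  rmul v (qofR 0) = 0.
Proof. by have := rmulRD HV 0 0 v; rewrite addr0 => /(congr1 (fun t => t - rmul v (qofR 0))); rewrite subrr addrK. Qed.
Lemma lmulRN R V lmul rmul mul one nrm (HV : @is_qbanach_alg R V lmul rmul mul one nrm) r v :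
  lmul (qofR (- r)) v = - lmul (qofR r) v.
Proof. by apply/eqP; rewrite -addr_eq0 -(lmulRD HV) addNr (lmulR0 HV). Qed.
Lemma rmulRN R V lmul rmul mul one nrm (HV : @is_qbanach_alg R V lmul rmul mul one nrm) r v :
  rmul v (qofR (- r)) = - rmul v (qofR r).
Proof. by apply/eqP; rewrite -addr_eq0 -(rmulRD HV) addNr (rmulR0 HV). Qed.
Lemma lmulRn R V lmul rmul mul one nrm (HV : @is_qbanach_alg R V lmul rmul mul one nrm) n v :
  lmul (qofR n%:R) v = v *+ n.
Proof.
elim: n => [|n IH]; first by rewrite (lmulR0 HV).
by rewrite -addn1 natrD (lmulRD HV) IH (lmul1 HV) addn1 mulrSr.
Qed.
Lemma rmulRn R V lmul rmul mul one nrm (HV : @is_qbanach_alg R V lmul rmul mul one nrm) n v :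
  rmul v (qofR n%:R) = v *+ n.
Proof.
elim: n => [|n IH]; first by rewrite (rmulR0 HV).
by rewrite -addn1 natrD (rmulRD HV) IH (rmul1 HV) addn1 mulrSr.
Qed.
Lemma nrm_lR R V lmul rmul mul one nrm (HV : @is_qbanach_alg R V lmul rmul mul one nrm) r v :
  nrm (lmul (qofR r) v) = `|r| * nrm v.
Proof. by rewrite (nrm_lmul HV) qnormR. Qed.
Lemma nrm_rR R V lmul rmul mul one nrm (HV : @is_qbanach_alg R V lmul rmul mul one nrm) r v :
  nrm (rmul v (qofR r)) = `|r| * nrm v.
Proof. by rewrite (nrm_rmul HV) qnormR. Qed.
Lemma nrmN R V lmul rmul mul one nrm (HV : @is_qbanach_alg R V lmul rmul mul one nrm) v :
  nrm (- v) = nrm v.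
Proof.
have -> : - v = lmul (qofR (-1)) v by rewrite (lmulRN HV) (lmulRn HV 1).
by rewrite (nrm_lR HV) normrN normr1 mul1r.
Qed.
Lemma nrm_ge0 R V lmul rmul mul one nrm (HV : @is_qbanach_alg R V lmul rmul mul one nrm) v :
  0 <= nrm v.
Proof.
have := nrmD HV v (- v); rewrite subrr (nrm0 HV) (nrmN HV) -mulr2n -mulr_natr.
by rewrite pmulr_lge0.
Qed.
Lemma nrmB R V lmul rmul mul one nrm (HV : @is_qbanach_alg R V lmul rmul mul one nrm) u v :
  nrm (u - v) = nrm (v - u).
Proof. by rewrite -(nrmN HV) opprB. Qed.
Lemma nrm_vn R V lmul rmul mul one nrm (HV : @is_qbanach_alg R V lmul rmul mul one nrm) v n :
  nrm (v *+ n) = n%:R * nrm v.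
Proof. by rewrite -(lmulRn HV) (nrm_lR HV) normr_nat. Qed.

Lemma lmul_rmulR R V lmul rmul mul one nrm (HV : @is_qbanach_alg R V lmul rmul mul one nrm) r x :
  lmul (qofR r) x = rmul x (qofR r).
Proof.
pose D s := lmul (qofR s) x - rmul x (qofR s).
have DD s t : D (s + t) = D s + D t.
  by rewrite /D (lmulRD HV) (rmulRD HV) opprD addrACA.
have DN s : D (- s) = - D s by rewrite /D (lmulRN HV) (rmulRN HV) opprB opprK addrC.
have Dn n : D n%:R = 0 by rewrite /D (lmulRn HV) (rmulRn HV) subrr.
have Dz (k : int) : D k%:~R = 0.
  by case: k => n; rewrite ?NegzE ?mulrNz ?DN Dn ?oppr0.
have Dmul s n : D (s *+ n) = D s *+ n.
  elim: n => [|n IH]; first by rewrite !mulr0n -(Dn 0%N).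
  by rewrite !mulrS DD IH.
have Db t : 0 <= t <= 1 -> nrm (D t) <= nrm x *+ 2.
  case/andP=> t0 t1; rewrite /D; apply: le_trans (nrmD HV _ _) _.
  rewrite (nrmN HV) (nrm_lR HV) (nrm_rR HV) ger0_norm // mulr2n.
  by apply: lerD; rewrite ler_piMl ?(nrm_ge0 HV).
have bound n : nrm (D r) *+ n.+1 <= nrm x *+ 2.
  rewrite -mulr_natl -(nrm_vn HV) -Dmul.
  set s := r *+ n.+1.
  have -> : D s = D (s - (Num.floor s)%:~R) by rewrite DD DN Dz oppr0 addr0.
  apply: Db; rewrite subr_ge0 floor_le /=.
  rewrite lerBlDl; apply/ltW; have := floorD1_gt s; by rewrite intrD.
have c0 : nrm (D r) = 0.
  apply/eqP; rewrite eq_le (nrm_ge0 HV) andbT; apply/negP => /negP; rewrite -ltNge => c0.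
  set c := nrm (D r) in c0 bound.
  have x0 : 0 <= nrm x *+ 2 by rewrite mulrn_wge0 // (nrm_ge0 HV).
  have := archi_boundP (divr_ge0 x0 (ltW c0)).
  move: (Num.Def.archi_bound _) => m hm.
  have := bound m; rewrite leNgt => /negP; apply.
  rewrite ltr_pdivrMr // in hm; apply: (lt_le_trans hm).
  by rewrite -[c *+ _]mulr_natl ler_pM2r // ler_nat.
by have := nrm_eq0 HV c0; rewrite /D => /eqP; rewrite subr_eq0 => /eqP.
Qed.

Fixpoint pw (V : zmodType) (mul : V -> V -> V) (one u : V) n :=
  match n with 0%N => one | n'.+1 => mul u (pw mul one u n') end.
Fixpoint ps (V : zmodType) (mul : V -> V -> V) (one u : V) n :=
  match n with 0%N => 0 | n'.+1 => ps mul one u n' + pw mul one u n' end.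

Lemma small0 R V lmul rmul mul one nrm (HV : @is_qbanach_alg R V lmul rmul mul one nrm) d :
  (forall e, 0 < e -> nrm d < e) -> d = 0.
Proof.
move=> H; apply: (nrm_eq0 HV); apply/eqP; rewrite eq_le (nrm_ge0 HV) andbT.
rewrite leNgt; apply/negP => c0; have := H _ c0; by rewrite ltxx.
Qed.

Lemma neumann R V lmul rmul mul one nrm (HV : @is_qbanach_alg R V lmul rmul mul one nrm) u :
  nrm u <= 2^-1 -> qinvertible mul one (one - u).
Proof.
move=> u2.
have pwSr n : pw mul one u n.+1 = mul (pw mul one u n) u.
  elim: n => [|n IH] /=; first by rewrite (mulx1 HV) (mul1x HV).
  by rewrite -(Defs.mulA HV) -IH.
have pwn n : nrm (pw mul one u n) <= (2^-1) ^+ n.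
  elim: n => [|n IH] /=; first by rewrite (nrm1 HV) expr0.
  apply: le_trans (nrmM HV _ _) _; rewrite exprS.
  by apply: ler_pM; rewrite ?(nrm_ge0 HV).
have psL n : mul (one - u) (ps mul one u n) = one - pw mul one u n.
  elim: n => [|n IH] /=; first by rewrite (mulx0 HV) subrr.
  rewrite (mulDr HV) IH (mulBx HV) (mul1x HV).
  by rewrite GRing.addrA GRing.subrK.
have psR n : mul (ps mul one u n) (one - u) = one - pw mul one u n.
  elim: n => [|n IH] /=; first by rewrite (mul0x HV) subrr.
  rewrite -[mul u _]/(pw mul one u n.+1) pwSr (mulDl HV) IH (mulxB HV) (mulx1 HV).
  by rewrite GRing.addrA GRing.subrK.
have cau n k : nrm (ps mul one u (n + k) - ps mul one u n) <= (2^-1) ^+ n *+ 2 - (2^-1) ^+ (n + k) *+ 2.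
  elim: k => [|k IH]; first by rewrite addn0 !subrr (nrm0 HV).
  rewrite addnS /= addrAC; apply: le_trans (nrmD HV _ _) _.
  apply: le_trans (lerD IH (pwn _)) _.
  rewrite exprS; move: (_ ^+ (n + k)) (_ ^+ n) => b a.
  have e : (2^-1 * b) *+ 2 = b.
    by rewrite -mulr_natl mulrA mulfV ?mul1r // pnatr_eq0.
  rewrite e !mulr2n; lra.
have [l hl] : exists l, (fun n => nrm (ps mul one u n - l)) @ \oo --> 0.
  apply: (complete HV) => e e0.
  have [N HN] := geomN (divr_gt0 e0 (ltr0Sn R 1)).
  exists N => m n Nm Nn.
  have key k j : (N <= j)%N -> nrm (ps mul one u (j + k) - ps mul one u j) < e.
    move=> Nj; apply: le_lt_trans (cau j k) _.
    have := HN j Nj; have : 0 <= (2^-1 : R) ^+ (j + k) by rewrite exprn_ge0 // invr_ge0.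
    move: (_ ^+ (j + k)) (_ ^+ j) => b a; rewrite ltr_pdivlMr // => b0 h; rewrite !mulr2n; lra.
  case: (leqP n m) => nm.
    by rewrite -(subnKC nm); apply: key.
  by rewrite (nrmB HV) -(subnKC (ltnW nm)); apply: key.
have hl' := hl; rewrite cvg0P in hl'; last by move=> n; apply: (nrm_ge0 HV).
have lim_aux (c : R) (f : nat -> V) : 0 <= c ->
    (forall n, nrm (f n) <= c * nrm (ps mul one u n - l) + (2^-1) ^+ n) -> forall e, 0 < e -> exists n, nrm (f n) < e.
  move=> c0 hf e e0.
  have e20 : 0 < e / 2 by rewrite divr_gt0.
  have c1 : 0 < c + 1 by lra.
  have [N1 H1] := hl' _ (divr_gt0 e20 c1).
  have [N2 H2] := geomN e20.
  exists (maxn N1 N2); apply: le_lt_trans (hf _) _.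
  have h1 := H1 _ (leq_maxl N1 N2); have h2 := H2 _ (leq_maxr N1 N2).
  rewrite ltr_pdivlMr // in h1.
  have : 0 <= nrm (ps mul one u (maxn N1 N2) - l) by apply: (nrm_ge0 HV).
  move: (nrm _) h1 => t h1 t0.
  have ct : c * t <= t * (c + 1) by rewrite mulrC ler_wpM2l // lerDl.
  apply: le_lt_trans (lerD ct (lexx _)) _.
  move: (t * (c + 1)) h1 => T h1; move: (_ ^+ _) h2 => A h2; lra.
exists l; split; apply/eqP; rewrite -subr_eq0; apply/eqP; apply: (small0 HV) => e e0.
- pose f n := mul (one - u) (l - ps mul one u n) - pw mul one u n.
  have H n : nrm (f n) <= nrm (one - u) * nrm (ps mul one u n - l) + (2^-1) ^+ n.
    apply: le_trans (nrmD HV _ _) _; rewrite (nrmN HV).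
    apply: lerD (pwn n); apply: le_trans (nrmM HV _ _) _.
    by rewrite (nrmB HV (l)).
  have [n hn] := lim_aux _ f (nrm_ge0 HV _) H e e0.
  by rewrite /f (mulxB HV) psL opprB addrA addrAC addrK in hn.
- pose f n := mul (l - ps mul one u n) (one - u) - pw mul one u n.
  have H n : nrm (f n) <= nrm (one - u) * nrm (ps mul one u n - l) + (2^-1) ^+ n.
    apply: le_trans (nrmD HV _ _) _; rewrite (nrmN HV).
    apply: lerD (pwn n); apply: le_trans (nrmM HV _ _) _.
    by rewrite (nrmB HV (l)) mulrC.
  have [n hn] := lim_aux _ f (nrm_ge0 HV _) H e e0.
  by rewrite /f (mulBx HV) psR opprB addrA addrAC addrK in hn.
Qed.

Lemma perturb R V lmul rmul mul one nrm (HV : @is_qbanach_alg R V lmul rmul mul one nrm) y z x :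
  mul y z = one -> mul z y = one -> nrm z * nrm (x - y) <= 2^-1 -> qinvertible mul one x.
Proof.
move=> yz zy hb.
pose u := mul z (y - x).
have [w [w1 w2]] : qinvertible mul one (one - u).
  apply: (neumann HV); apply: le_trans (nrmM HV _ _) _; by rewrite (nrmB HV y).
have ex : mul y (one - u) = x.
  by rewrite (mulxB HV) (mulx1 HV) /u (Defs.mulA HV) yz (mul1x HV) opprB addrC subrK.
have zx : mul z x = one - u by rewrite -ex (Defs.mulA HV) zy (mul1x HV).
exists (mul w z); split.
  by rewrite -ex -(Defs.mulA HV) (Defs.mulA HV (one - u)) w1 (mul1x HV).
by rewrite -(Defs.mulA HV) zx.
Qed.

Lemma sq_diff (R : realType) (x y d Q : R) : `|x - y| <= d -> `|y| <= Q -> `|x ^+ 2 - y ^+ 2| <= d * (d + Q *+ 2).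
Proof.
move=> hd hQ.
have -> : x ^+ 2 - y ^+ 2 = (x - y) * ((x - y) + y *+ 2) by rewrite !mulr2n; ring.
rewrite normrM; apply: ler_pM => //.
apply: le_trans (ler_normD _ _) _; apply: lerD => //.
by rewrite normrMn lerMn2r.
Qed.

Lemma comp_le (R : realType) (a b c d : R) :
  `|a| <= Num.sqrt (a ^+ 2 + b ^+ 2 + c ^+ 2 + d ^+ 2) /\
  `|b| <= Num.sqrt (a ^+ 2 + b ^+ 2 + c ^+ 2 + d ^+ 2) /\
  `|c| <= Num.sqrt (a ^+ 2 + b ^+ 2 + c ^+ 2 + d ^+ 2) /\
  `|d| <= Num.sqrt (a ^+ 2 + b ^+ 2 + c ^+ 2 + d ^+ 2).
Proof.
have sq (t : R) : 0 <= t ^+ 2 by apply: sqr_ge0.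
have H (t : R) : t ^+ 2 <= a ^+ 2 + b ^+ 2 + c ^+ 2 + d ^+ 2 -> `|t| <= Num.sqrt (a ^+ 2 + b ^+ 2 + c ^+ 2 + d ^+ 2).
  move=> ht; rewrite -sqrtr_sqr ler_sqrt //; apply: le_trans ht; exact: sq.
move: (sq a) (sq b) (sq c) (sq d) => ha hb hc hd.
by split; [|split; [|split]]; apply: H; lra.
Qed.

Lemma qnorm_sq (R : realType) (q : quat R) :
  qnorm q ^+ 2 = qre q ^+ 2 + qi q ^+ 2 + qj q ^+ 2 + qk q ^+ 2.
Proof. by rewrite /qnorm sqr_sqrtr // !addr_ge0 // sqr_ge0. Qed.
Lemma zid (V : zmodType) (m x y z w : V) : m - x + y - (m - z + w) = (z - x) + (y - w).
Proof. by rewrite opprD opprB addrACA [m - x + _]addrC [_ + (m - x)]addrA subrK. Qed.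

Lemma lmulRB R V lmul rmul mul one nrm (HV : @is_qbanach_alg R V lmul rmul mul one nrm) r s v :
  lmul (qofR (r - s)) v = lmul (qofR r) v - lmul (qofR s) v.
Proof. by rewrite (lmulRD HV) (lmulRN HV). Qed.

Lemma Qclose R V lmul rmul mul one nrm (HV : @is_qbanach_alg R V lmul rmul mul one nrm) a q eta :
  0 < eta -> exists d, 0 < d /\ forall p, qnorm (qsub p q) < d ->
    nrm (Qop lmul mul one a p - Qop lmul mul one a q) < eta.
Proof.
move=> eta0.
set Q := qnorm q.
have Q0 : 0 <= Q by rewrite /Q /qnorm sqrtr_ge0.
have A0 := nrm_ge0 HV a; have O0 := nrm_ge0 HV one.
set K := nrm a *+ 2 + (1 + Q *+ 2) *+ 4 * nrm one.
have K0 : 0 <= K by rewrite /K; rewrite !mulr2n; nra.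
have K1 : 0 < K + 1 by lra.
exists (Num.min 1 (eta / (K + 1))); split.
  by rewrite lt_min ltr01 divr_gt0.
move=> p; rewrite lt_min => /andP [hp1 hp2].
rewrite ltr_pdivlMr // in hp2.
set d0 := qnorm (qsub p q) in hp1 hp2.
have d00 : 0 <= d0 by rewrite /d0 /qnorm sqrtr_ge0.
have [h0 [h1 [h2 h3]]] := comp_le (qre (qsub p q)) (qi (qsub p q)) (qj (qsub p q)) (qk (qsub p q)).
have [g0 [g1 [g2 g3]]] := comp_le (qre q) (qi q) (qj q) (qk q).
rewrite -/(qnorm _) -/d0 in h0 h1 h2 h3.
rewrite -/(qnorm _) -/Q in g0 g1 g2 g3.
rewrite /= in h0 h1 h2 h3.
rewrite /Qop zid -!(lmulRB HV).
apply: le_lt_trans (nrmD HV _ _) _.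
rewrite !(nrm_lR HV).
have e1 : `|2 * Req q - 2 * Req p| <= d0 *+ 2.
  by rewrite -mulrBr normrM ger0_norm // -normrN opprB mulr_natl lerMn2r h0.
have e2 : `|qnorm p ^+ 2 - qnorm q ^+ 2| <= (d0 * (d0 + Q *+ 2)) *+ 4.
  rewrite !qnorm_sq.
  have s0 := sq_diff h0 g0; have s1 := sq_diff h1 g1.
  have s2 := sq_diff h2 g2; have s3 := sq_diff h3 g3.
  set t := d0 * _ in s0 s1 s2 s3 *.
  move: s0 s1 s2 s3; set x0 := qre p; set x1 := qi p; set x2 := qj p; set x3 := qk p.
  set y0 := qre q; set y1 := qi q; set y2 := qj q; set y3 := qk q.
  move=> s0 s1 s2 s3.
  have -> : x0 ^+ 2 + x1 ^+ 2 + x2 ^+ 2 + x3 ^+ 2 - (y0 ^+ 2 + y1 ^+ 2 + y2 ^+ 2 + y3 ^+ 2)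
     = (x0 ^+ 2 - y0 ^+ 2) + (x1 ^+ 2 - y1 ^+ 2) + (x2 ^+ 2 - y2 ^+ 2) + (x3 ^+ 2 - y3 ^+ 2) by ring.
  apply: le_trans (ler_normD _ _) _; rewrite mulrSr; apply: lerD => //.
  apply: le_trans (ler_normD _ _) _; rewrite mulrSr; apply: lerD => //.
  apply: le_trans (ler_normD _ _) _; rewrite mulrSr; apply: lerD => //.
have f1 := ler_wpM2r A0 e1.
have f2 := ler_wpM2r O0 e2.
apply: le_lt_trans (lerD f1 f2) _.
apply: le_lt_trans hp2.
rewrite /K.
set O := nrm one; set A := nrm a.
have -> : d0 * (A *+ 2 + (1 + Q *+ 2) *+ 4 * O + 1) =
   d0 *+ 2 * A + d0 * (d0 + Q *+ 2) *+ 4 * O + (d0 * (1 - d0) * (O *+ 4) + d0) by ring.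
rewrite lerDl addr_ge0 // mulr_ge0 ?mulrn_wge0 // mulr_ge0 //; lra.
Qed.

Theorem mainTheorem5 (R : realType) (V : zmodType)
    (lmul : quat R -> V -> V) (rmul : V -> quat R -> V)
    (mul : V -> V -> V) (one : V) (nrm : V -> R)
    (HV : is_qbanach_alg lmul rmul mul one nrm)
    (one_neq0 : one <> 0)
    (a : V) (q : quat R)
    (hq : qboundary (S_spectrum lmul mul one a) q) :
  exists b : nat -> V,
    (forall n, nrm (b n) = 1) /\
    (fun n => nrm (mul (Qop lmul mul one a q) (b n))) @ \oo --> 0 /\
    (fun n => nrm (mul (b n) (Qop lmul mul one a q))) @ \oo --> 0.
Proof.
set x := Qop lmul mul one a q.
have xni : ~ qinvertible mul one x.
  case=> z [xz zx].
  have c0 := nrm_ge0 HV z.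
  have c1 : 0 < nrm z + 1 by lra.
  have eta0 : 0 < 2^-1 / (nrm z + 1) by rewrite divr_gt0.
  have [d [d0 hd]] := Qclose HV a q eta0.
  have [[s [hs Ss]] _] := hq d d0.
  apply: Ss; apply: (perturb HV xz zx).
  have := hd _ hs; rewrite ltr_pdivlMr // => h.
  have t0 := nrm_ge0 HV (Qop lmul mul one a s - x).
  move: (nrm (Qop _ _ _ _ _ - x)) h t0 => t h t0.
  apply: le_trans (ltW h); rewrite mulrC ler_wpM2l // lerDl //.
have key e : 0 < e -> exists b, nrm b = 1 /\ nrm (mul x b) < e /\ nrm (mul b x) < e.
  move=> e0.
  have eta0 : 0 < e / 3 by rewrite divr_gt0.
  have [d [d0 hd]] := Qclose HV a q eta0.
  have [_ [p [hp Sp]]] := hq d d0.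
  have [z [yz zy]] := contrapT Sp.
  set y := Qop lmul mul one a p in yz zy hd.
  have hyx := hd _ hp; rewrite -/y in hyx.
  have big : 2^-1 < nrm z * nrm (x - y).
    rewrite ltNge; apply/negP => h; exact: xni (perturb HV yz zy h).
  rewrite (nrmB HV) in big.
  have t0 := nrm_ge0 HV (y - x).
  have z0 : 0 < nrm z.
    rewrite lt_neqAle (nrm_ge0 HV) andbT; apply/eqP => h.
    by move: big; rewrite -h mul0r ltNge invr_ge0 ler0n.
  set c := (nrm z)^-1.
  have c0 : 0 < c by rewrite invr_gt0.
  have cz : c * nrm z = 1 by rewrite mulVf // gt_eqF.
  have cbound : c < nrm (y - x) *+ 2.
    have h1 : 1 < nrm z * nrm (y - x) *+ 2.
      by move: big; move: (nrm z * _) => w; rewrite -[2^-1]div1r ltr_pdivrMr // mulr_natr.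
    have : c * 1 < c * (nrm z * nrm (y - x) *+ 2) by rewrite ltr_pM2l.
    by rewrite mulr1 mulrnAr mulrA cz mul1r.
  exists (lmul (qofR c) z); split; [|split].
  - by rewrite (nrm_lR HV) gtr0_norm.
  - rewrite (lmul_rmulR HV) -(rmul_mul HV) (nrm_rR HV) gtr0_norm //.
    have -> : mul x z = mul (x - y) z + one by rewrite (mulBx HV) yz subrK.
    apply: le_lt_trans (ler_wpM2l (ltW c0) (nrmD HV _ _)) _.
    rewrite (nrm1 HV).
    apply: le_lt_trans (ler_wpM2l (ltW c0) (lerD (nrmM HV _ _) (lexx 1))) _.
    rewrite mulrDr mulr1 mulrC -mulrA [nrm z * c]mulrC cz mulr1 (nrmB HV).
    move: (nrm (y - x)) hyx t0 cbound => t ht t0 hc.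
    rewrite ltr_pdivlMr // in ht. rewrite mulr2n in hc. lra.
  - rewrite -(lmul_mul HV) (nrm_lR HV) gtr0_norm //.
    have -> : mul z x = mul z (x - y) + one by rewrite (mulxB HV) zy subrK.
    apply: le_lt_trans (ler_wpM2l (ltW c0) (nrmD HV _ _)) _.
    rewrite (nrm1 HV).
    apply: le_lt_trans (ler_wpM2l (ltW c0) (lerD (nrmM HV _ _) (lexx 1))) _.
    rewrite mulrDr mulr1 mulrA cz mul1r (nrmB HV).
    move: (nrm (y - x)) hyx t0 cbound => t ht t0 hc.
    rewrite ltr_pdivlMr // in ht. rewrite mulr2n in hc. lra.
have key' : forall n : nat, exists b, nrm b = 1 /\ nrm (mul x b) < n.+1%:R^-1 /\ nrm (mul b x) < n.+1%:R^-1.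
  by move=> n; apply: key; rewrite invr_gt0.
have [b hb] := boolp.choice key'.
exists b; split; first by move=> n; case: (hb n).
have small (e : R) : 0 < e -> exists N, forall n, (N <= n)%N -> n.+1%:R^-1 < e.
  move=> e0; have ei : 0 <= e^-1 by rewrite invr_ge0 ltW.
  have hN := archi_boundP ei.
  exists (Num.Def.archi_bound e^-1) => n hn.
  have h2 : e^-1 < n.+1%:R.
    apply: (lt_le_trans hN); rewrite ler_nat; exact: leqW.
  rewrite invf_plt ?posrE ?ltr0Sn //.
split; apply/cvg0P; try (by move=> n; apply: (nrm_ge0 HV)); move=> e /small [N HN]; exists N => n /HN;
  case: (hb n) => _ [h1 h2]; apply: lt_trans.
- exact: h1.
- exact: h2.
Qed.
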